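(* Suppose that for every $n\ge1$, $S_n\subset\mathbb{R}^2$ is the union of finitely many pairwise disjoint closed PL topological disks and $S_{n+1}\subset\mathrm{int}(S_n)$. Then $\lim_{n\to\infty}M(S_n,S_{n+1})=0$ if and only if $\lim_{n\to\infty}N(S_n,S_{n+1})=0$.
   Context: PL means piecewise linear; $l(\gamma)$ is Euclidean length. For $A\subset\mathbb{R}^2$ a union of finitely many pairwise disjoint closed PL disks and $B\subset A$, with $\partial A$ the union of the boundary circles of the components of $A$: $N(A,B)=\inf\{\delta>0:$ for each $x\in\partial A$ there exist $y\in B$ and a PL arc $\gamma\subset A$ from $x$ to $y$ with $l(\gamma)<\delta\}$, and $M(A,B)=\inf\{\delta>0:$ for each $x\in A$ there exist $y\in B$ and a PL arc $\gamma\subset A$ from $x$ to $y$ with $l(\gamma)<\delta\}$. *)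

(* Defs.v *)
From Stdlib Require Import Reals List.
From Coquelicot Require Import Coquelicot.
Import ListNotations.
Open Scope R_scope.

Definition pt := (R * R)%type.
Definition pset := pt -> Prop.

Definition dist2 (p q : pt) : R :=
  sqrt ((fst p - fst q) ^ 2 + (snd p - snd q) ^ 2).
Definition norm2 (p : pt) : R := dist2 p (0, 0).

Definition seg (p q : pt) : pset :=
  fun x => exists t, 0 <= t <= 1 /\
    x = (fst p + t * (fst q - fst p), snd p + t * (snd q - snd p)).

Definition vtx (l : list pt) (i : nat) : pt := nth i l (0, 0).

Definition edge (l : list pt) (i : nat) : pset := seg (vtx l i) (vtx l (S i)).

Definition simple_pl_path (l : list pt) : Prop :=
  (2 <= length l)%nat /\
  (forall i, (S i < length l)%nat -> vtx l i <> vtx l (S i)) /\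
  (forall i j x, (S i < length l)%nat -> (S j < length l)%nat -> (i < j)%nat ->
     edge l i x -> edge l j x -> j = S i /\ x = vtx l j).

Definition on_path (l : list pt) : pset :=
  fun x => exists i, (S i < length l)%nat /\ edge l i x.

Fixpoint pl_length (l : list pt) : R :=
  match l with
  | p :: ((q :: _) as l') => dist2 p q + pl_length l'
  | _ => 0
  end.

Definition pl_arc_in (A : pset) (x y : pt) (l : list pt) : Prop :=
  simple_pl_path l /\ vtx l 0 = x /\ vtx l (pred (length l)) = y /\
  (forall z, on_path l z -> A z).

Definition cedge (l : list pt) (i : nat) : pset :=
  seg (vtx l i) (vtx l (Nat.modulo (S i) (length l))).

Definition simple_polygon (l : list pt) : Prop :=
  (3 <= length l)%nat /\
  (forall i, (i < length l)%nat -> vtx l i <> vtx l (Nat.modulo (S i) (length l))) /\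
  (forall i j x, (i < length l)%nat -> (j < length l)%nat -> i <> j ->
     cedge l i x -> cedge l j x ->
       (j = Nat.modulo (S i) (length l) /\ x = vtx l j) \/
       (i = Nat.modulo (S j) (length l) /\ x = vtx l i)).

Definition on_polygon (l : list pt) : pset :=
  fun x => exists i, (i < length l)%nat /\ cedge l i x.

(* z lies strictly outside a closed ball (centred at 0) containing the polygon *)
Definition far_from (l : list pt) (z : pt) : Prop :=
  forall i, (i < length l)%nat -> norm2 (vtx l i) < norm2 z.

(* the closed region bounded by the polygon = polygon ∪ bounded complementary
   component = points that cannot be joined to the far region by a continuous
   path avoiding the polygon *)
Definition polygon_disk (l : list pt) : pset :=
  fun x => forall z, far_from l z ->
    forall f g : R -> R, continuity f -> continuity g ->
      (f 0, g 0) = x -> (f 1, g 1) = z ->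
      exists t, 0 <= t <= 1 /\ on_polygon l (f t, g t).

Definition disjoint_PL_disks (A : pset) : Prop :=
  exists Ps : list (list pt),
    Ps <> [] /\
    (forall P, In P Ps -> simple_polygon P) /\
    (forall i j x, (i < length Ps)%nat -> (j < length Ps)%nat -> i <> j ->
        polygon_disk (nth i Ps []) x -> polygon_disk (nth j Ps []) x -> False) /\
    (forall x, A x <-> exists P, In P Ps /\ polygon_disk P x).

Definition int_pl (A : pset) : pset :=
  fun x => exists r, 0 < r /\ forall y, dist2 x y < r -> A y.
Definition cl_pl (A : pset) : pset :=
  fun x => forall r, 0 < r -> exists y, dist2 x y < r /\ A y.
(* boundary: for A a union of disjoint closed disks this is the union of
   their boundary circles *)
Definition bdry (A : pset) : pset :=
  fun x => cl_pl A x /\ ~ int_pl A x.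

Definition reach_within (A B : pset) (x : pt) (d : R) : Prop :=
  exists y, B y /\ exists l, pl_arc_in A x y l /\ pl_length l < d.

Definition N_AB (A B : pset) : Rbar :=
  Glb_Rbar (fun d => 0 < d /\ forall x, bdry A x -> reach_within A B x d).

Definition M_AB (A B : pset) : Rbar :=
  Glb_Rbar (fun d => 0 < d /\ forall x, A x -> reach_within A B x d).

Definition Rbar_seq_to_0 (u : nat -> Rbar) : Prop :=
  forall eps, 0 < eps -> exists n0, forall n, (n0 <= n)%nat ->
    Rbar_lt (Finite (- eps)) (u n) /\ Rbar_lt (u n) (Finite eps).

(* Main.v *)
Require Import Defs.
From Stdlib Require Import Reals List Lra Lia Psatz ZArith Classical ClassicalEpsilon FunctionalExtensionality.
From Coquelicot Require Import Coquelicot.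
Import ListNotations.
Open Scope R_scope.

Definition lin (p q : pt) (t : R) : pt :=
  (fst p + t * (fst q - fst p), snd p + t * (snd q - snd p)).

Lemma seg_lin p q x : seg p q x <-> exists t, 0 <= t <= 1 /\ x = lin p q t.
Proof. reflexivity. Qed.

Lemma dist2_sq x y : dist2 x y = sqrt ((fst x - fst y)^2 + (snd x - snd y)^2).
Proof. reflexivity. Qed.

Lemma dist2_ge0 x y : 0 <= dist2 x y.
Proof. apply sqrt_pos. Qed.

Lemma dist2_sym x y : dist2 x y = dist2 y x.
Proof. unfold dist2; f_equal; ring. Qed.

Lemma dist2_refl x : dist2 x x = 0.
Proof. unfold dist2. replace ((fst x - fst x) ^ 2 + (snd x - snd x) ^ 2) with 0 by ring. apply sqrt_0. Qed.

Lemma dist2_eq0 x y : dist2 x y = 0 -> x = y.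
Proof. unfold dist2; intro H. destruct x as [a b], y as [c d]; simpl in *.
 pose proof (pow2_ge_0 (a-c)); pose proof (pow2_ge_0 (b-d)).
 apply sqrt_eq_0 in H; [|lra].
 assert ((a-c)^2 = 0) by lra. assert ((b-d)^2 = 0) by lra.
 f_equal; apply Rminus_diag_uniq; [destruct (Req_dec (a-c) 0) as [E|E]; [exact E| now apply (pow_nonzero _ 2) in E] | destruct (Req_dec (b-d) 0) as [E|E]; [exact E| now apply (pow_nonzero _ 2) in E]]. Qed.

Lemma dist2_scale t x y : dist2 (fst x + t * (fst y - fst x), snd x + t * (snd y - snd x)) x
   = Rabs t * dist2 x y.
Proof. unfold dist2; cbn [fst snd].
 replace ((fst x + t * (fst y - fst x) - fst x) ^ 2 + (snd x + t * (snd y - snd x) - snd x) ^ 2)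
  with (t^2 * ((fst x - fst y) ^ 2 + (snd x - snd y) ^ 2)) by ring.
 rewrite sqrt_mult; [| apply pow2_ge_0 | apply Rplus_le_le_0_compat; apply pow2_ge_0]. f_equal. rewrite <- sqrt_Rsqr_abs. unfold Rsqr. f_equal; ring. Qed.

Lemma dist_lin_l p q t : dist2 p (lin p q t) = Rabs t * dist2 p q.
Proof. rewrite dist2_sym. apply dist2_scale. Qed.

Lemma dist_lin_r p q t : dist2 (lin p q t) q = Rabs (1 - t) * dist2 p q.
Proof. unfold lin. replace (fst p + t * (fst q - fst p), snd p + t * (snd q - snd p))
  with (fst q + (1-t) * (fst p - fst q), snd q + (1-t) * (snd p - snd q))
  by (f_equal; ring). rewrite dist2_scale. rewrite dist2_sym. reflexivity. Qed.

Lemma dist_lin_lin p q s t : dist2 (lin p q s) (lin p q t) = Rabs (s - t) * dist2 p q.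
Proof. unfold lin, dist2; cbn [fst snd].
 replace ((fst p + s * (fst q - fst p) - (fst p + t * (fst q - fst p))) ^ 2 +
  (snd p + s * (snd q - snd p) - (snd p + t * (snd q - snd p))) ^ 2)
  with ((s-t)^2 * ((fst p - fst q) ^ 2 + (snd p - snd q) ^ 2)) by ring.
 rewrite sqrt_mult; [| apply pow2_ge_0 | apply Rplus_le_le_0_compat; apply pow2_ge_0]. f_equal. rewrite <- sqrt_Rsqr_abs. unfold Rsqr. f_equal; ring. Qed.

Lemma lin0 p q : lin p q 0 = p.
Proof. unfold lin; destruct p; simpl; f_equal; ring. Qed.
Lemma lin1 p q : lin p q 1 = q.
Proof. unfold lin; destruct p, q; simpl; f_equal; ring. Qed.

Lemma lin_lin p q a b t : lin (lin p q a) (lin p q b) t = lin p q (a + t * (b - a)).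
Proof. unfold lin; simpl; f_equal; ring. Qed.

Lemma seg_sub p q a b x : 0 <= a <= 1 -> 0 <= b <= 1 ->
  seg (lin p q a) (lin p q b) x -> seg p q x.
Proof. intros Ha Hb [t [Ht ->]]. exists (a + t*(b-a)). split; [|apply lin_lin].
 destruct (Rle_dec a b); [assert (0 <= t*(b-a) <= b - a) by (split; nra) | assert (b - a <= t*(b-a) <= 0) by (split; nra)]; lra. Qed.

Lemma seg_sub_param p q a b x : 
  seg (lin p q a) (lin p q b) x -> exists s, x = lin p q s /\ Rmin a b <= s <= Rmax a b.
Proof. intros [t [Ht ->]]. exists (a + t*(b-a)). split; [apply lin_lin|].
 unfold Rmin, Rmax; destruct (Rle_dec a b); [assert (0 <= t*(b-a) <= b - a) by (split; nra) | assert (b - a <= t*(b-a) <= 0) by (split; nra)]; lra. Qed.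

Lemma lin_inj p q s t : p <> q -> lin p q s = lin p q t -> s = t.
Proof. intros Hpq H. assert (dist2 (lin p q s) (lin p q t) = 0) by (rewrite H; apply dist2_refl).
 rewrite dist_lin_lin in H0. assert (dist2 p q <> 0) by (intro E; apply Hpq, dist2_eq0, E).
 apply Rmult_integral in H0; destruct H0; [|contradiction].
 destruct (Rcase_abs (s-t)); [rewrite Rabs_left in H0 | rewrite Rabs_right in H0]; lra. Qed.
Definition hpos (u : R) : R := (u + Rabs u) / 2.

Lemma hpos_cont : continuity hpos.
Proof. unfold hpos. intro x. apply continuity_pt_div.
 - apply continuity_pt_plus. apply derivable_continuous_pt, derivable_pt_id. apply Rcontinuity_abs.
 - apply continuity_pt_const. intros a b; reflexivity.
 - lra. Qed.

Lemma hpos_pos u : 0 <= u -> hpos u = u.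
Proof. intro; unfold hpos; rewrite Rabs_right; lra. Qed.
Lemma hpos_neg u : u <= 0 -> hpos u = 0.
Proof. intro; unfold hpos; rewrite Rabs_left1; lra. Qed.

Lemma cont_affine (a b : R) : continuity (fun t => a + b * t).
Proof. intro x. apply continuity_pt_plus. apply continuity_pt_const; intros ? ?; reflexivity.
 apply continuity_pt_mult. apply continuity_pt_const; intros ? ?; reflexivity.
 apply derivable_continuous_pt, derivable_pt_id. Qed.

Lemma seg_apart p q x : ~ seg p q x ->
  exists d, 0 < d /\ forall y, seg p q y -> d <= dist2 x y.
Proof. intro Hn.
 set (g := fun t => (fst x - (fst p + t * (fst q - fst p)))^2 + (snd x - (snd p + t * (snd q - snd p)))^2).
 destruct (continuity_ab_min g 0 1) as [m [Hm Hm01]]. lra.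
 { intros c _. unfold g. reg. }
 assert (Hg : 0 < g m).
 { pose proof (pow2_ge_0 (fst x - (fst p + m * (fst q - fst p)))).
   pose proof (pow2_ge_0 (snd x - (snd p + m * (snd q - snd p)))).
   destruct (Rle_lt_or_eq_dec 0 (g m)) as [HH|HH]. unfold g; lra. exact HH.
   exfalso. apply Hn. exists m. split; auto.
   assert (E: dist2 x (lin p q m) = 0). { unfold dist2, lin; cbn [fst snd]. fold (g m). rewrite <- HH. apply sqrt_0. }
   apply dist2_eq0 in E. exact E. }
 exists (sqrt (g m)). split. apply sqrt_lt_R0; auto.
 intros y [t [Ht ->]]. unfold dist2; cbn [fst snd]. apply sqrt_le_1_alt. apply Hm. auto. Qed.

Lemma list_min {A : Type} (l : list A) (Q : A -> R -> Prop) :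
  (forall a, In a l -> exists d, 0 < d /\ Q a d) ->
  (forall a d d', Q a d -> 0 < d' <= d -> Q a d') ->
  exists d, 0 < d /\ forall a, In a l -> Q a d.
Proof. intros H Hm. induction l as [|a l IH].
 - exists 1; split; [lra| intros a []].
 - destruct IH as [d [Hd Hq]]. intros b Hb; apply H; right; auto.
   destruct (H a (or_introl eq_refl)) as [d1 [Hd1 Hq1]].
   exists (Rmin d d1). split. apply Rmin_pos; auto.
   intros b [<-|Hb]. apply (Hm _ d1); auto. split; [apply Rmin_pos; auto| apply Rmin_r].
   apply (Hm _ d); auto. split; [apply Rmin_pos; auto| apply Rmin_l]. Qed.

Lemma nat_min (n : nat) (Q : nat -> R -> Prop) :
  (forall i, (i < n)%nat -> exists d, 0 < d /\ Q i d) ->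
  (forall a d d', Q a d -> 0 < d' <= d -> Q a d') ->
  exists d, 0 < d /\ forall i, (i < n)%nat -> Q i d.
Proof. intros HH Hm. destruct (list_min (seq 0 n) Q) as [d [Hd Hq]]; auto.
 intros a Ha; apply in_seq in Ha; apply HH; lia.
 exists d; split; auto. intros i Hi; apply Hq, in_seq; lia. Qed.

Lemma polygon_apart l x : ~ on_polygon l x ->
  exists d, 0 < d /\ forall y, on_polygon l y -> d <= dist2 x y.
Proof. intro Hn.
 destruct (nat_min (length l) (fun i d => forall y, cedge l i y -> d <= dist2 x y)) as [d [Hd Hq]].
 - intros i Hi. apply seg_apart. intro Hs. apply Hn. exists i; auto.
 - intros a d d' Hq [? ?] y Hy. specialize (Hq y Hy); lra.
 - exists d; split; auto. intros y [i [Hi Hy]]. eapply Hq; eauto. Qed.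

Lemma disk_compl_open P x : ~ polygon_disk P x ->
  exists d, 0 < d /\ forall y, dist2 x y < d -> ~ polygon_disk P y.
Proof. intro Hn. unfold polygon_disk in Hn.
 apply not_all_ex_not in Hn as [z Hn].
 apply imply_to_and in Hn as [Hz Hn].
 apply not_all_ex_not in Hn as [f Hn]. apply not_all_ex_not in Hn as [g Hn].
 apply imply_to_and in Hn as [Hf Hn]. apply imply_to_and in Hn as [Hg Hn].
 apply imply_to_and in Hn as [H0 Hn]. apply imply_to_and in Hn as [H1 Hn].
 assert (Hav : forall t, 0 <= t <= 1 -> ~ on_polygon P (f t, g t)).
 { intros t Ht Hp. apply Hn. exists t; auto. }
 assert (Hx : ~ on_polygon P x). { rewrite <- H0. apply Hav; lra. }
 destruct (polygon_apart P x Hx) as [d [Hd Hd2]].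
 exists d; split; auto. intros y Hxy Hy.
 set (f' := fun t => f (hpos (2*t-1)) + hpos (1 - 2*t) * (fst y - fst x)).
 set (g' := fun t => g (hpos (2*t-1)) + hpos (1 - 2*t) * (snd y - snd x)).
 assert (Cf : continuity f').
 { unfold f'. intro t. apply continuity_pt_plus.
   apply (continuity_pt_comp (fun t => hpos (2*t-1)) f). apply (continuity_pt_comp (fun t => 2*t-1) hpos).
   replace (fun t => 2*t-1) with (fun t => -1 + 2*t) by (apply functional_extensionality; intro; ring).
   apply cont_affine. apply hpos_cont. apply Hf.
   apply continuity_pt_mult. apply (continuity_pt_comp (fun t => 1-2*t) hpos).
   replace (fun t => 1-2*t) with (fun t => 1 + (-2)*t) by (apply functional_extensionality; intro; ring).
   apply cont_affine. apply hpos_cont. apply continuity_pt_const; intros ? ?; reflexivity. }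
 assert (Cg : continuity g').
 { unfold g'. intro t. apply continuity_pt_plus.
   apply (continuity_pt_comp (fun t => hpos (2*t-1)) g). apply (continuity_pt_comp (fun t => 2*t-1) hpos).
   replace (fun t => 2*t-1) with (fun t => -1 + 2*t) by (apply functional_extensionality; intro; ring).
   apply cont_affine. apply hpos_cont. apply Hg.
   apply continuity_pt_mult. apply (continuity_pt_comp (fun t => 1-2*t) hpos).
   replace (fun t => 1-2*t) with (fun t => 1 + (-2)*t) by (apply functional_extensionality; intro; ring).
   apply cont_affine. apply hpos_cont. apply continuity_pt_const; intros ? ?; reflexivity. }
 destruct (Hy z Hz f' g' Cf Cg) as [t [Ht Hp]].
 - unfold f', g'. rewrite (hpos_neg (2*0-1)), (hpos_pos (1-2*0)) by lra.
   assert (fst x = f 0 /\ snd x = g 0) as [E1 E2] by (rewrite <- H0; auto).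
   destruct y; simpl. f_equal; rewrite <- ?E1, <- ?E2; ring.
 - unfold f', g'. rewrite (hpos_pos (2*1-1)), (hpos_neg (1-2*1)) by lra.
   replace (2*1-1) with 1 by ring. rewrite <- H1; f_equal; ring.
 - unfold f', g' in Hp. destruct (Rle_dec t (1/2)).
   + rewrite (hpos_neg (2*t-1)), (hpos_pos (1-2*t)) in Hp by lra.
     assert (fst x = f 0 /\ snd x = g 0) as [E1 E2] by (rewrite <- H0; auto).
     rewrite <- E1, <- E2 in Hp.
     specialize (Hd2 _ Hp).
     replace (fst x + (1 - 2 * t) * (fst y - fst x), snd x + (1 - 2 * t) * (snd y - snd x))
       with (lin x y (1-2*t)) in Hd2 by reflexivity.
     rewrite dist_lin_l in Hd2. rewrite Rabs_right in Hd2 by lra.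
     pose proof (dist2_ge0 x y). nra.
   + rewrite (hpos_pos (2*t-1)), (hpos_neg (1-2*t)) in Hp by lra.
     rewrite !Rmult_0_l, !Rplus_0_r in Hp. apply (Hav (2*t-1)); auto. lra. Qed.

Lemma path_prepend (f g : R -> R) (a b z : pt) :
  continuity f -> continuity g -> (f 0, g 0) = a -> (f 1, g 1) = z ->
  exists f' g', continuity f' /\ continuity g' /\ (f' 0, g' 0) = b /\ (f' 1, g' 1) = z /\
   forall t, 0 <= t <= 1 ->
     (exists s, 0 <= s <= 1 /\ (f' t, g' t) = lin a b s) \/
     (exists s, 0 <= s <= 1 /\ (f' t, g' t) = (f s, g s)).
Proof. intros Hf Hg H0 H1.
 assert (fst a = f 0 /\ snd a = g 0) as [E1 E2] by (rewrite <- H0; auto).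
 exists (fun t => f (hpos (2*t-1)) + hpos (1 - 2*t) * (fst b - fst a)).
 exists (fun t => g (hpos (2*t-1)) + hpos (1 - 2*t) * (snd b - snd a)).
 split; [|split; [|split; [|split]]].
 - intro t. apply continuity_pt_plus.
   apply (continuity_pt_comp (fun t => hpos (2*t-1)) f). apply (continuity_pt_comp (fun t => 2*t-1) hpos).
   replace (fun t => 2*t-1) with (fun t => -1 + 2*t) by (apply functional_extensionality; intro; ring).
   apply cont_affine. apply hpos_cont. apply Hf.
   apply continuity_pt_mult. apply (continuity_pt_comp (fun t => 1-2*t) hpos).
   replace (fun t => 1-2*t) with (fun t => 1 + (-2)*t) by (apply functional_extensionality; intro; ring).
   apply cont_affine. apply hpos_cont. apply continuity_pt_const; intros ? ?; reflexivity.
 - intro t. apply continuity_pt_plus.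
   apply (continuity_pt_comp (fun t => hpos (2*t-1)) g). apply (continuity_pt_comp (fun t => 2*t-1) hpos).
   replace (fun t => 2*t-1) with (fun t => -1 + 2*t) by (apply functional_extensionality; intro; ring).
   apply cont_affine. apply hpos_cont. apply Hg.
   apply continuity_pt_mult. apply (continuity_pt_comp (fun t => 1-2*t) hpos).
   replace (fun t => 1-2*t) with (fun t => 1 + (-2)*t) by (apply functional_extensionality; intro; ring).
   apply cont_affine. apply hpos_cont. apply continuity_pt_const; intros ? ?; reflexivity.
 - rewrite (hpos_neg (2*0-1)), (hpos_pos (1-2*0)) by lra.
   destruct b; simpl. f_equal; rewrite <- ?E1, <- ?E2; ring.
 - rewrite (hpos_pos (2*1-1)), (hpos_neg (1-2*1)) by lra.
   replace (2*1-1) with 1 by ring. rewrite <- H1; f_equal; ring.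
 - intros t Ht. destruct (Rle_dec t (1/2)).
   + left. exists (1 - 2*t). split. lra.
     rewrite (hpos_neg (2*t-1)), (hpos_pos (1-2*t)) by lra.
     rewrite <- E1, <- E2. reflexivity.
   + right. exists (2*t-1). split. lra.
     rewrite (hpos_pos (2*t-1)), (hpos_neg (1-2*t)) by lra. f_equal; ring. Qed.

Lemma polygon_in_disk P x : on_polygon P x -> polygon_disk P x.
Proof. intros H z Hz f g Hf Hg H0 H1. exists 0. split. lra. rewrite H0; auto. Qed.

Lemma disk_nonisolated P x : simple_polygon P -> polygon_disk P x ->
  forall r, 0 < r -> exists y, polygon_disk P y /\ y <> x /\ dist2 x y < r.
Proof. intros HP Hx r Hr. destruct (classic (on_polygon P x)) as [Hon|Hoff].
 - destruct Hon as [i [Hi [t [Ht Ex]]]].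
   set (p := vtx P i) in *. set (q := vtx P (Nat.modulo (S i) (length P))) in *.
   assert (Hpq : p <> q) by (apply HP; auto).
   assert (Dpos : 0 < dist2 p q).
   { destruct (Rle_lt_or_eq_dec 0 (dist2 p q) (dist2_ge0 _ _)) as [?|E]; auto.
     symmetry in E; apply dist2_eq0 in E; contradiction. }
   set (s := Rmin (1/2) (r / (2 * dist2 p q))).
   assert (Hs : 0 < s). { unfold s. apply Rmin_pos. lra. apply Rdiv_lt_0_compat; lra. }
   assert (Hs2 : s * dist2 p q < r).
   { assert (s <= r / (2 * dist2 p q)) by apply Rmin_r.
     apply Rmult_le_compat_r with (r := dist2 p q) in H. 2: lra.
     replace (r / (2 * dist2 p q) * dist2 p q) with (r/2) in H by (field; lra). lra. }
   assert (Hs1 : s <= 1/2) by apply Rmin_l.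
   set (t' := if Rle_dec t (1/2) then t + s else t - s).
   assert (Ht' : 0 <= t' <= 1 /\ Rabs (t' - t) = s).
   { unfold t'; destruct (Rle_dec t (1/2)).
     split. lra. replace (t+s-t) with s by ring. apply Rabs_right; lra.
     split. lra. replace (t-s-t) with (-s) by ring. rewrite Rabs_Ropp. apply Rabs_right; lra. }
   exists (lin p q t'). split; [|split].
   + apply polygon_in_disk. exists i; split; auto. exists t'; split; [tauto|reflexivity].
   + rewrite Ex. intro E. apply lin_inj in E; auto. destruct Ht' as [_ Ha].
     rewrite E in Ha. replace (t-t) with 0 in Ha by ring. rewrite Rabs_R0 in Ha. lra.
   + rewrite Ex. fold (lin p q t). rewrite dist_lin_lin. rewrite <- Rabs_Ropp.
     replace (-(t - t')) with (t'-t) by ring. destruct Ht' as [_ ->]. auto.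
 - destruct (polygon_apart P x Hoff) as [d [Hd Hd2]].
   set (e := Rmin d r / 2).
   assert (He : 0 < e) by (unfold e; pose proof (Rmin_pos d r Hd Hr); lra).
   assert (He1 : e < d /\ e < r) by (unfold e; pose proof (Rmin_l d r); pose proof (Rmin_r d r); lra).
   set (y := (fst x + e, snd x)).
   assert (Dxy : dist2 x y = e).
   { unfold dist2, y; cbn [fst snd]. replace ((fst x - (fst x + e)) ^ 2 + (snd x - snd x) ^ 2) with (e*e) by ring.
     apply sqrt_square; lra. }
   exists y. split; [|split].
   + intros z Hz f g Hf Hg H0 H1.
     destruct (path_prepend f g y x z Hf Hg H0 H1) as [f' [g' [Cf [Cg [F0 [F1 Hc]]]]]].
     destruct (Hx z Hz f' g' Cf Cg F0 F1) as [t [Ht Hp]].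
     destruct (Hc t Ht) as [[s [Hs Es]]|[s [Hs Es]]].
     * exfalso. rewrite Es in Hp. apply Hd2 in Hp. rewrite dist2_sym, dist_lin_r in Hp.
       rewrite dist2_sym, Dxy in Hp. rewrite Rabs_right in Hp by lra. nra.
     * exists s; split; auto. rewrite <- Es; auto.
   + intro E. assert (fst y = fst x) by (rewrite E; auto). unfold y in H; simpl in H; lra.
   + lra. Qed.

Lemma int_in A x : int_pl A x -> A x.
Proof. intros [r [Hr H]]. apply H. rewrite dist2_refl; auto. Qed.

Lemma S_compl_open S x : disjoint_PL_disks S -> ~ S x ->
  exists d, 0 < d /\ forall y, dist2 x y < d -> ~ S y.
Proof. intros [Ps [_ [_ [_ HS]]]] Hn.
 destruct (list_min Ps (fun P d => forall y, dist2 x y < d -> ~ polygon_disk P y)) as [d [Hd Hq]].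
 - intros P HP. apply disk_compl_open. intro Hx. apply Hn, HS. eauto.
 - intros P d d' H [? ?] y Hy. apply H; lra.
 - exists d; split; auto. intros y Hy Sy. apply HS in Sy as [P [HP Hy']]. eapply Hq; eauto. Qed.

Lemma S_cl_in S x : disjoint_PL_disks S -> cl_pl S x -> S x.
Proof. intros HS Hc. apply NNPP; intro Hn.
 destruct (S_compl_open S x HS Hn) as [d [Hd H]].
 destruct (Hc d Hd) as [y [Hy Sy]]. eapply H; eauto. Qed.

Lemma S_nonisolated S x : disjoint_PL_disks S -> S x ->
  forall r, 0 < r -> exists y, S y /\ y <> x /\ dist2 x y < r.
Proof. intros HS0 Sx r Hr. pose proof HS0 as [Ps [_ [Hsim [_ HS]]]].
 apply HS in Sx as [P [HP Hx]].
 destruct (disk_nonisolated P x (Hsim P HP) Hx r Hr) as [y [Hy [Hyx Hd]]].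
 exists y; split; auto. apply HS; eauto. Qed.

Lemma nat_bound (n : nat) (h : nat -> R) : exists K, forall i, (i < n)%nat -> h i <= K.
Proof. induction n as [|n [K HK]]. exists 0; intros; lia.
 exists (Rmax K (h n)). intros i Hi. destruct (Nat.eq_dec i n) as [->|].
 apply Rmax_r. eapply Rle_trans; [apply HK; lia| apply Rmax_l]. Qed.

Lemma list_bound {A : Type} (l : list A) (Q : A -> R -> Prop) :
  (forall a, In a l -> exists K, Q a K) ->
  (forall a K K', Q a K -> K <= K' -> Q a K') ->
  exists K, forall a, In a l -> Q a K.
Proof. intros H Hm. induction l as [|a l IH].
 - exists 0; intros a [].
 - destruct IH as [K HK]. intros b Hb; apply H; right; auto.
   destruct (H a (or_introl eq_refl)) as [K1 HK1].
   exists (Rmax K K1). intros b [<-|Hb]. eapply Hm; eauto; apply Rmax_r.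
   eapply Hm; eauto; apply Rmax_l. Qed.

Lemma norm_lin p q t : 0 <= t <= 1 -> norm2 (lin p q t) <= Rmax (norm2 p) (norm2 q).
Proof. intro Ht. unfold norm2, dist2, lin; cbn [fst snd].
 destruct p as [a b], q as [c d]; cbn [fst snd].
 set (A := (a - 0) ^ 2 + (b - 0) ^ 2). set (B := (c - 0) ^ 2 + (d - 0) ^ 2).
 assert (Hc : (a + t * (c - a) - 0) ^ 2 + (b + t * (d - b) - 0) ^ 2 <= (1-t) * A + t * B).
 { unfold A, B. assert (0 <= t*(1-t)) by nra. assert (0 <= (a-c)^2 + (b-d)^2) by (pose proof (pow2_ge_0 (a-c)); pose proof (pow2_ge_0 (b-d)); lra).
   assert (E : (1 - t) * ((a - 0) ^ 2 + (b - 0) ^ 2) + t * ((c - 0) ^ 2 + (d - 0) ^ 2) -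
     ((a + t * (c - a) - 0) ^ 2 + (b + t * (d - b) - 0) ^ 2) = t*(1-t) * ((a-c)^2 + (b-d)^2)) by ring.
   assert (0 <= t * (1 - t) * ((a - c) ^ 2 + (b - d) ^ 2)) by (apply Rmult_le_pos; auto). lra. }
 destruct (Rle_dec A B).
 - eapply Rle_trans; [|apply Rmax_r]. apply sqrt_le_1_alt. nra.
 - eapply Rle_trans; [|apply Rmax_l]. apply sqrt_le_1_alt. nra. Qed.

Lemma abs_fst_norm x : Rabs (fst x) <= norm2 x /\ Rabs (snd x) <= norm2 x.
Proof. unfold norm2, dist2. cbn [fst snd]. rewrite !Rminus_0_r.
 pose proof (pow2_ge_0 (fst x)); pose proof (pow2_ge_0 (snd x)).
 split.
 - rewrite <- (sqrt_pow2 (Rabs (fst x)) (Rabs_pos _)). rewrite pow2_abs. apply sqrt_le_1_alt; lra.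
 - rewrite <- (sqrt_pow2 (Rabs (snd x)) (Rabs_pos _)). rewrite pow2_abs. apply sqrt_le_1_alt; lra. Qed.

Lemma disk_bound P : exists K, forall x, polygon_disk P x -> norm2 x <= K.
Proof. destruct (nat_bound (length P) (fun i => norm2 (vtx P i))) as [K HK].
 exists K. intros x Hx. apply Rnot_lt_le. intro Hlt.
 destruct (Hx x) with (f := fun _ : R => fst x) (g := fun _ : R => snd x) as [t [Ht Hp]].
 - intros i Hi. specialize (HK i Hi). simpl in HK. lra.
 - intro; apply continuity_pt_const; intros ? ?; reflexivity.
 - intro; apply continuity_pt_const; intros ? ?; reflexivity.
 - destruct x; reflexivity.
 - destruct x; reflexivity.
 - destruct Hp as [i [Hi [s [Hs Es]]]].
   replace (fst x, snd x) with x in Es by (destruct x; reflexivity).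
   assert (Hm : (Nat.modulo (S i) (length P) < length P)%nat) by (apply Nat.mod_upper_bound; lia).
   pose proof (norm_lin (vtx P i) (vtx P (Nat.modulo (S i) (length P))) s Hs).
   fold (lin (vtx P i) (vtx P (Nat.modulo (S i) (length P))) s) in Es. rewrite <- Es in H.
   pose proof (HK i Hi); pose proof (HK _ Hm). simpl in *.
   unfold Rmax in H; destruct Rle_dec in H; lra. Qed.

Lemma S_bound S : disjoint_PL_disks S -> exists K, forall x, S x -> Rabs (fst x) <= K /\ Rabs (snd x) <= K.
Proof. intros [Ps [_ [_ [_ HS]]]].
 destruct (list_bound Ps (fun P K => forall x, polygon_disk P x -> norm2 x <= K)) as [K HK].
 - intros P _; apply disk_bound.
 - intros P K K' H HK x Hx; specialize (H x Hx); lra.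
 - exists K. intros x Sx. apply HS in Sx as [P [HP Hx]]. specialize (HK P HP x Hx).
   pose proof (abs_fst_norm x). lra. Qed.

Lemma skipn_cons_nth {A} (l : list A) k d : (k < length l)%nat ->
  skipn k l = nth k l d :: skipn (S k) l.
Proof. revert l; induction k; intros [|a l] H; simpl in *; try lia; auto.
 apply IHk; lia. Qed.

Lemma pl_length_cons2 x y l : pl_length (x :: y :: l) = dist2 x y + pl_length (y :: l).
Proof. reflexivity. Qed.

Lemma pl_length_ge0 l : 0 <= pl_length l.
Proof. induction l as [|a [|b l] IH]; simpl; try lra.
 pose proof (dist2_ge0 a b). simpl in IH. lra. Qed.

Lemma pl_length_cons_ge a l : pl_length l <= pl_length (a :: l).
Proof. destruct l as [|b l]. simpl; lra. rewrite pl_length_cons2. pose proof (dist2_ge0 a b); lra. Qed.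

Lemma pl_length_skipn k l : pl_length (skipn k l) <= pl_length l.
Proof. revert l; induction k; intros [|a l]; simpl; try lra.
 eapply Rle_trans; [apply IHk| apply pl_length_cons_ge]. Qed.

Lemma prepend_simple v0 R : simple_pl_path R -> v0 <> vtx R 0 ->
 (forall x, seg v0 (vtx R 0) x -> on_path R x -> x = vtx R 0) -> simple_pl_path (v0 :: R).
Proof. intros [HL [HD HI]] Hv Hm. split; [|split].
 - simpl. lia.
 - intros [|i] Hi. exact Hv. apply HD. simpl in Hi; lia.
 - intros [|i] [|j] x Hi Hj Hij Ei Ej; try lia.
   + change (edge (v0::R) 0) with (seg v0 (vtx R 0)) in Ei.
     change (edge (v0::R) (S j)) with (edge R j) in Ej. simpl in Hj.
     assert (Ex : x = vtx R 0) by (apply Hm; auto; exists j; split; [lia|auto]).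
     destruct j as [|j].
     * split; auto.
     * exfalso. assert (E0 : edge R 0 (vtx R 0)) by (exists 0; split; [lra| unfold lin; destruct (vtx R 0); simpl; f_equal; ring]).
       subst x. destruct (HI 0%nat (S j) (vtx R 0) ltac:(lia) ltac:(lia) ltac:(lia) E0 Ej) as [Hj1 Hv1].
       apply (HD 0%nat); [lia|]. inversion Hj1; subst. exact Hv1.
   + change (edge (v0::R) (S i)) with (edge R i) in Ei.
     change (edge (v0::R) (S j)) with (edge R j) in Ej. simpl in Hi, Hj.
     destruct (HI i j x ltac:(lia) ltac:(lia) ltac:(lia) Ei Ej) as [-> ->]. split; reflexivity. Qed.

Lemma on_path_cons v0 R x : on_path (v0 :: R) x -> seg v0 (vtx R 0) x \/ on_path R x.
Proof. intros [[|i] [Hi Ex]]. left; exact Ex. right; exists i; split; [simpl in Hi; lia| exact Ex]. Qed.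

Lemma tail_simple Q j tau : simple_pl_path Q -> (S j < length Q)%nat -> 0 <= tau < 1 ->
 let w := lin (vtx Q j) (vtx Q (S j)) tau in
 simple_pl_path (w :: skipn (S j) Q) /\
 vtx (w :: skipn (S j) Q) (pred (length (w :: skipn (S j) Q))) = vtx Q (pred (length Q)) /\
 pl_length (w :: skipn (S j) Q) <= pl_length Q /\
 (forall x, on_path (w :: skipn (S j) Q) x ->
    (exists s, tau <= s <= 1 /\ x = lin (vtx Q j) (vtx Q (S j)) s) \/
    exists k, (S (S j + k) < length Q)%nat /\ edge Q (S j + k) x).
Proof. intros [HL [HD HI]] Hj Ht w.
 assert (Hlen : length (skipn (S j) Q) = (length Q - S j)%nat) by apply length_skipn.
 assert (V : forall i, vtx (w :: skipn (S j) Q) (S i) = vtx Q (S j + i)).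
 { intro i. unfold vtx. change (nth (S i) (w :: skipn (S j) Q) (0,0)) with (nth i (skipn (S j) Q) (0,0)). apply nth_skipn. }
 assert (Hne : vtx Q j <> vtx Q (S j)) by (apply HD; lia).
 assert (E0 : forall x, edge (w :: skipn (S j) Q) 0 x -> exists s, tau <= s <= 1 /\ x = lin (vtx Q j) (vtx Q (S j)) s).
 { intros x Ex. unfold edge in Ex.
   assert (Ex' : seg (lin (vtx Q j) (vtx Q (S j)) tau) (lin (vtx Q j) (vtx Q (S j)) 1) x) by (rewrite lin1; rewrite V, Nat.add_0_r in Ex; exact Ex).
   clear Ex; rename Ex' into Ex.
   apply seg_sub_param in Ex as [s [-> Hs]]. exists s; split; auto.
   unfold Rmin, Rmax in Hs; destruct Rle_dec in Hs; lra. }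
 assert (ES : forall k, edge (w :: skipn (S j) Q) (S k) = edge Q (S j + k)).
 { intro k. unfold edge. rewrite !V. f_equal. f_equal. lia. }
 split; [split; [|split]|split; [|split]].
 - change (length (w :: skipn (S j) Q)) with (S (length (skipn (S j) Q))). rewrite Hlen. lia.
 - intros [|i] Hi.
   + intro E. assert (E' : lin (vtx Q j) (vtx Q (S j)) tau = lin (vtx Q j) (vtx Q (S j)) 1) by (rewrite lin1; rewrite V, Nat.add_0_r in E; exact E).
     apply lin_inj in E'; auto. lra.
   + rewrite !V. replace (S j + S i)%nat with (S (S j + i)) by lia. apply HD. change (length (w :: skipn (S j) Q)) with (S (length (skipn (S j) Q))) in Hi. rewrite Hlen in Hi. lia.
 - intros [|i] [|k] x Hi Hk Hik Ei Ek; try lia.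
   + rewrite ES in Ek. apply E0 in Ei as [s [Hs Ex]].
     assert (Eq : edge Q j x) by (exists s; split; [lra|exact Ex]).
     change (length (w :: skipn (S j) Q)) with (S (length (skipn (S j) Q))) in Hk. rewrite Hlen in Hk.
     destruct (HI j (S j + k)%nat x ltac:(lia) ltac:(lia) ltac:(lia) Eq Ek) as [Hk1 ->].
     split. lia. rewrite V. f_equal; lia.
   + rewrite ES in Ei, Ek. change (length (w :: skipn (S j) Q)) with (S (length (skipn (S j) Q))) in Hi, Hk. rewrite Hlen in Hi, Hk.
     destruct (HI (S j + i)%nat (S j + k)%nat x ltac:(lia) ltac:(lia) ltac:(lia) Ei Ek) as [Hk1 ->].
     split. lia. rewrite V. f_equal; lia.
 - change (length (w :: skipn (S j) Q)) with (S (length (skipn (S j) Q))). rewrite Hlen. simpl pred. destruct (length Q - S j)%nat eqn:E. lia.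
   rewrite V. f_equal; lia.
 - rewrite (skipn_cons_nth Q (S j) (0,0)) by lia.
   rewrite pl_length_cons2. fold (vtx Q (S j)).
   assert (Hs : (j < length Q)%nat) by lia.
   pose proof (pl_length_skipn j Q) as Hk. rewrite (skipn_cons_nth Q j (0,0) Hs) in Hk.
   rewrite (skipn_cons_nth Q (S j) (0,0)) in Hk by lia.
   rewrite pl_length_cons2 in Hk. fold (vtx Q j) (vtx Q (S j)) in Hk.
   unfold w. rewrite dist_lin_r. rewrite Rabs_right by lra.
   pose proof (dist2_ge0 (vtx Q j) (vtx Q (S j))). nra.
 - intros x [[|k] [Hk Ex]].
   + left. apply E0; auto.
   + right. exists k. rewrite ES in Ex. split; auto. change (length (w :: skipn (S j) Q)) with (S (length (skipn (S j) Q))) in Hk. rewrite Hlen in Hk. lia. Qed.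

Lemma max_nat (P : nat -> Prop) n k : P k -> (k < n)%nat ->
  exists j, P j /\ (j < n)%nat /\ forall i, P i -> (i < n)%nat -> (i <= j)%nat.
Proof. revert k; induction n; intros k Hk Hn. lia.
 destruct (classic (P n)) as [Hp|Hp].
 - exists n; split; auto; split; [lia|]. intros; lia.
 - destruct (IHn k Hk) as [j [Hj [Hjn Hm]]].
   { destruct (Nat.eq_dec k n); [subst; contradiction| lia]. }
   exists j; split; auto; split; [lia|]. intros i Hi Hin.
   destruct (Nat.eq_dec i n); [subst; contradiction| apply Hm; auto; lia]. Qed.

Lemma seg_max p q c d : (exists t, 0 <= t <= 1 /\ seg c d (lin p q t)) ->
  exists tau, 0 <= tau <= 1 /\ seg c d (lin p q tau) /\
   forall t, 0 <= t <= 1 -> seg c d (lin p q t) -> t <= tau.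
Proof. intros [t0 [Ht0 Hs0]].
 set (E := fun t => 0 <= t <= 1 /\ seg c d (lin p q t)).
 destruct (completeness E) as [tau [Hub Hlub]].
 - exists 1. intros t [Ht _]; lra.
 - exists t0; split; auto.
 - assert (Htau : t0 <= tau <= 1).
   { split. apply Hub; split; auto. apply Hlub. intros t [Ht _]; lra. }
   assert (Hin : seg c d (lin p q tau)).
   { apply NNPP; intro Hn. destruct (seg_apart c d _ Hn) as [del [Hdel Hap]].
     destruct (Req_dec (dist2 p q) 0) as [HD|HD].
     - apply dist2_eq0 in HD. subst q.
       assert (lin p p tau = lin p p t0) by (unfold lin; f_equal; ring). rewrite H in Hn. contradiction.
     - pose proof (dist2_ge0 p q).
       assert (HDp : 0 < dist2 p q) by lra.
       destruct (classic (exists t, E t /\ tau - del / dist2 p q < t)) as [[t [[Ht Hst] Hlt]]|Hno].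
       + specialize (Hap _ Hst). rewrite dist_lin_lin in Hap.
         assert (t <= tau) by (apply Hub; split; auto).
         rewrite Rabs_right in Hap by lra.
         assert ((tau - t) * dist2 p q < del).
         { apply Rmult_lt_compat_r with (r := dist2 p q) in Hlt; auto.
           replace ((tau - del / dist2 p q) * dist2 p q) with (tau * dist2 p q - del) in Hlt by (field; lra). lra. }
         lra.
       + assert (tau <= tau - del / dist2 p q).
         { apply Hlub. intros t Et. apply Rnot_lt_le. intro Hl. apply Hno. eauto. }
         assert (0 < del / dist2 p q) by (apply Rdiv_lt_0_compat; auto). lra. }
   exists tau. split; [lra|split; auto]. intros t Ht Hs. apply Hub. split; auto. Qed.

Lemma seg_sub_pref v0 a w x : seg v0 a w -> seg v0 w x -> seg v0 a x.
Proof. intros [s [Hs ->]] Hx. rewrite <- (lin0 v0 a) in Hx at 1.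
 apply (seg_sub v0 a 0 s); auto; lra. Qed.

Lemma arc_prepend A v0 a y Q : pl_arc_in A a y Q -> (forall x, seg v0 a x -> A x) -> v0 <> y ->
  exists l, pl_arc_in A v0 y l /\ pl_length l <= dist2 v0 a + pl_length Q.
Proof. intros [HQ [Ha [Hy HA]]] HsA Hvy.
 pose proof HQ as [HL [HD HI]].
 set (P := fun j => exists x, edge Q j x /\ seg v0 a x).
 assert (P0 : P 0%nat).
 { exists a. split. exists 0. split. lra. rewrite <- Ha. unfold lin; destruct (vtx Q 0); simpl; f_equal; ring.
   exists 1. split. lra. unfold lin; destruct a; simpl; f_equal; ring. }
 destruct (max_nat P (pred (length Q)) 0 P0 ltac:(lia)) as [j [Pj [Hjm Hmax]]].
 assert (Hj : (S j < length Q)%nat) by lia.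
 destruct (seg_max (vtx Q j) (vtx Q (S j)) v0 a) as [tau [Ht [Hw Htmax]]].
 { destruct Pj as [x [[t [Ht ->]] Hx]]. exists t; split; auto. }
 set (w := lin (vtx Q j) (vtx Q (S j)) tau) in *.
 assert (Hlq : 0 <= pl_length Q) by apply pl_length_ge0.
 assert (Hdw : dist2 v0 w <= dist2 v0 a).
 { destruct Hw as [s [Hs Es]]. rewrite Es. fold (lin v0 a s). rewrite dist_lin_l.
   rewrite Rabs_right by lra. pose proof (dist2_ge0 v0 a). nra. }
 destruct (Rle_lt_or_eq_dec tau 1 (proj2 Ht)) as [Ht1|Ht1].
 2:{
   assert (Ew : w = vtx Q (S j)) by (unfold w; rewrite Ht1; apply lin1).
   assert (Ejm : S j = pred (length Q)).
   { destruct (Nat.eq_dec (S j) (pred (length Q))); auto. exfalso.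
     assert (P (S j)). { exists w. split; auto. exists 0. split. lra. change (w = lin (vtx Q (S j)) (vtx Q (S (S j))) 0). rewrite lin0; auto. }
     assert (S j <= j)%nat by (apply Hmax; auto; lia). lia. }
   assert (Ewy : w = y) by (rewrite Ew, Ejm; auto).
   exists [v0; y]. split.
   - split; [split; [|split]|split; [|split]].
     + simpl; lia.
     + intros [|i] Hi; simpl in Hi; try lia. exact Hvy.
     + intros i k x Hi Hk; simpl in Hi, Hk; lia.
     + reflexivity.
     + reflexivity.
     + intros x [[|i] [Hi Ex]]; simpl in Hi; try lia.
       apply HsA. rewrite <- Ewy in Ex. eapply seg_sub_pref; eauto.
   - simpl. rewrite <- Ewy. lra. }
 destruct (tail_simple Q j tau HQ Hj ltac:(lra)) as [HR [HRy [HRl HRp]]]. fold w in HR, HRy, HRl, HRp.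
 set (R := w :: skipn (S j) Q) in *.
 assert (HRm : forall x, seg v0 a x -> on_path R x -> x = w).
 { intros x Hx Hp. destruct (HRp x Hp) as [[s [Hs Ex]]|[k [Hk Ex]]].
   - assert (s <= tau) by (apply Htmax; [lra| rewrite <- Ex; auto]).
     unfold w. rewrite Ex. f_equal. lra.
   - exfalso. assert (P (S j + k)%nat) by (exists x; auto).
     assert (S j + k <= j)%nat by (apply Hmax; auto; lia). lia. }
 assert (HRA : forall x, on_path R x -> A x).
 { intros x Hp. apply HA. destruct (HRp x Hp) as [[s [Hs Ex]]|[k [Hk Ex]]].
   - exists j. split; auto. exists s. split; [lra|exact Ex].
   - exists (S j + k)%nat. split; auto. }
 assert (HR0 : vtx R 0 = w) by reflexivity.
 destruct (classic (w = v0)) as [Ewv|Ewv].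
 - exists R. split. split; [exact HR|split; [rewrite HR0; auto|split; [rewrite HRy; auto| exact HRA]]].
   pose proof (dist2_ge0 v0 a). lra.
 - exists (v0 :: R). split.
   + split; [|split; [reflexivity|split]].
     * apply prepend_simple; auto. rewrite HR0; auto.
       intros x Hx Hp. apply HRm; auto. eapply seg_sub_pref; eauto.
     * destruct HR as [HRL _]. rewrite <- Hy, <- HRy.
       change (length (v0 :: R)) with (S (length R)). simpl pred.
       destruct (length R) as [|n] eqn:EL. lia. reflexivity.
     * intros x Hp. apply on_path_cons in Hp as [Hp|Hp]; auto.
       apply HsA. rewrite HR0 in Hp. eapply seg_sub_pref; eauto.
   + unfold R. rewrite pl_length_cons2. fold R. lra. Qed.

Lemma glb_ge0 (E : R -> Prop) : (forall d, E d -> 0 < d) -> Rbar_le 0 (Glb_Rbar E).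
Proof. intro H. destruct (Glb_Rbar_correct E) as [_ Hg]. apply Hg. intros x Hx. simpl. left; auto. Qed.

Lemma glb_le_elem (E : R -> Prop) d : E d -> Rbar_le (Glb_Rbar E) d.
Proof. intro H. destruct (Glb_Rbar_correct E) as [Hl _]. apply Hl; auto. Qed.

Lemma glb_lt_exists (E : R -> Prop) (a : R) : Rbar_lt (Glb_Rbar E) a -> exists d, E d /\ d < a.
Proof. intro H. apply NNPP; intro Hn. destruct (Glb_Rbar_correct E) as [_ Hg].
 assert (Rbar_le a (Glb_Rbar E)).
 { apply Hg. intros x Hx. simpl. apply Rnot_lt_le. intro Hl. apply Hn. eauto. }
 apply (Rbar_lt_not_le _ _ H H0). Qed.

Lemma glb_mono (E F : R -> Prop) : (forall d, E d -> F d) -> Rbar_le (Glb_Rbar F) (Glb_Rbar E).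
Proof. intro H. destruct (Glb_Rbar_correct E) as [_ Hg]. apply Hg.
 intros x Hx. apply glb_le_elem; auto. Qed.

Lemma reach_mono A B x d d' : reach_within A B x d -> d <= d' -> reach_within A B x d'.
Proof. intros [y [Hy [l [Hl Hd]]]] Hdd. exists y; split; auto. exists l; split; auto; lra. Qed.

Lemma exit_point A x q : disjoint_PL_disks A -> A x -> ~ A q ->
  exists tau, 0 <= tau <= 1 /\ bdry A (lin x q tau) /\ forall z, seg x (lin x q tau) z -> A z.
Proof. intros HA Ax Aq.
 set (T := fun t => 0 <= t <= 1 /\ forall s, 0 <= s <= t -> A (lin x q s)).
 assert (T0 : T 0). { split. lra. intros s Hs. replace s with 0 by lra. rewrite lin0; auto. }
 destruct (completeness T) as [tau [Hub Hlub]].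
 - exists 1. intros t [Ht _]; lra.
 - exists 0; auto.
 - assert (Ht : 0 <= tau <= 1). { split. apply Hub; auto. apply Hlub. intros t [Ht _]; lra. }
   set (D := dist2 x q). assert (HD : 0 <= D) by apply dist2_ge0.
   assert (C1 : forall s, 0 <= s < tau -> A (lin x q s)).
   { intros s Hs. apply NNPP; intro Hn.
     assert (tau <= s). { apply Hlub. intros t [Ht' Ht2]. apply Rnot_lt_le. intro Hl. apply Hn, Ht2. lra. }
     lra. }
   assert (C2 : A (lin x q tau)).
   { apply S_cl_in; auto. intros del Hdel.
     destruct (Req_dec tau 0) as [E0|E0].
     - exists (lin x q tau). rewrite dist2_refl. split; auto. rewrite E0, lin0. auto.
     - set (s := Rmax 0 (tau - del / (D + 1))).
       assert (Hs : 0 <= s < tau).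
       { unfold s. split. apply Rmax_l. apply Rmax_lub_lt. lra.
         assert (0 < del / (D+1)) by (apply Rdiv_lt_0_compat; lra). lra. }
       exists (lin x q s). split; [|apply C1; auto].
       rewrite dist_lin_lin. rewrite Rabs_right by lra. fold D.
       assert (tau - s <= del / (D+1)).
       { unfold s. pose proof (Rmax_r 0 (tau - del / (D + 1))). lra. }
       apply Rle_lt_trans with (del / (D+1) * D).
       apply Rmult_le_compat_r; auto.
       replace (del / (D + 1) * D) with (del * (D / (D+1))) by (field; lra).
       assert (D / (D+1) < 1). { apply Rmult_lt_reg_r with (D+1). lra. field_simplify; lra. }
       nra. }
   assert (C3 : T tau). { split; auto. intros s Hs. destruct (Req_dec s tau) as [->|]; auto. apply C1; lra. }
   exists tau. split; auto. split.
   + split.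
     * intros del Hdel. exists (lin x q tau). rewrite dist2_refl. split; auto.
     * intros [rho [Hrho Hint]].
       destruct (Req_dec tau 1) as [E1|E1].
       -- apply Aq. rewrite <- (lin1 x q). rewrite <- E1. apply Hint. rewrite dist2_refl; auto.
       -- set (t' := Rmin 1 (tau + rho / (2 * (D + 1)))).
          assert (Hr : 0 < rho / (2*(D+1))) by (apply Rdiv_lt_0_compat; lra).
          assert (Ht' : tau < t' <= 1).
          { unfold t'. split. apply Rmin_glb_lt; lra. apply Rmin_l. }
          assert (T t').
          { split. lra. intros s Hs. destruct (Rle_dec s tau). apply C3; lra.
            apply Hint. rewrite dist_lin_lin. rewrite Rabs_left1 by lra. fold D.
            assert (s - tau <= rho / (2 * (D+1))).
            { pose proof (Rmin_r 1 (tau + rho / (2 * (D + 1)))). fold t' in H. lra. }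
            apply Rle_lt_trans with (rho / (2 * (D + 1)) * D).
            replace (- (tau - s)) with (s - tau) by ring. apply Rmult_le_compat_r; auto.
            replace (rho / (2 * (D + 1)) * D) with (rho * (D / (2*(D+1)))) by (field; lra).
            assert (D / (2*(D+1)) < 1). { apply Rmult_lt_reg_r with (2*(D+1)). lra. field_simplify; lra. }
            nra. }
          assert (t' <= tau) by (apply Hub; auto). lra.
   + intros z Hz. rewrite <- (lin0 x q) in Hz at 1. destruct Hz as [t [Htt ->]].
     fold (lin (lin x q 0) (lin x q tau) t). rewrite lin_lin. apply C3. nra. Qed.

Lemma seg_arc A x y : x <> y -> (forall z, seg x y z -> A z) -> pl_arc_in A x y [x; y].
Proof. intros Hxy HA. split; [split; [|split]|split; [|split]].
 - simpl; lia.
 - intros [|i] Hi; simpl in Hi; try lia. exact Hxy.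
 - intros i k z Hi Hk; simpl in Hi, Hk; lia.
 - reflexivity.
 - reflexivity.
 - intros z [[|i] [Hi Ez]]; simpl in Hi; try lia. apply HA; exact Ez. Qed.

Lemma ball_seg (A : pset) x y rho : dist2 x y < rho -> (forall z, dist2 x z < rho -> A z) ->
  forall z, seg x y z -> A z.
Proof. intros Hd HA z [t [Ht ->]]. apply HA. fold (lin x y t). rewrite dist_lin_l.
 rewrite Rabs_right by lra. pose proof (dist2_ge0 x y). nra. Qed.

Lemma step (A B : pset) (r : R) : disjoint_PL_disks A -> disjoint_PL_disks B ->
  (forall x, B x -> int_pl A x) -> 0 < r ->
  (forall p, bdry A p -> reach_within A B p r) ->
  forall x, A x -> reach_within A B x (3 * r) \/ (forall y, dist2 x y < r -> ~ B y).
Proof. intros HA HB Hint Hr Hbd x Ax.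
 destruct (classic (B x)) as [Bx|Bx].
 - left. destruct (Hint x Bx) as [rho [Hrho Hball]].
   destruct (S_nonisolated B x HB Bx (Rmin rho r) (Rmin_pos _ _ Hrho Hr)) as [y [By [Hyx Hd]]].
   exists y. split; auto. exists [x; y]. split.
   + apply seg_arc; auto. apply (ball_seg A x y rho); auto.
     pose proof (Rmin_l rho r); lra.
   + simpl. pose proof (Rmin_r rho r). lra.
 - destruct (classic (forall q, dist2 x q < r -> A q)) as [Hball|Hno].
   + destruct (classic (exists y, dist2 x y < r /\ B y)) as [[y [Hd By]]|Hny].
     * left. exists y. split; auto. exists [x; y]. split.
       -- apply seg_arc. intro E; subst; contradiction. apply (ball_seg A x y r); auto.
       -- simpl. lra.
     * right. intros y Hd By. apply Hny; eauto.
   + left. apply not_all_ex_not in Hno as [q Hq]. apply imply_to_and in Hq as [Hdq Aq].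
     destruct (exit_point A x q HA Ax Aq) as [tau [Ht [Hb Hs]]].
     set (p := lin x q tau) in *.
     destruct (Hbd p Hb) as [y [By [l [Hl Hlen]]]].
     assert (Hxp : dist2 x p < r).
     { unfold p. rewrite dist_lin_l. rewrite Rabs_right by lra. pose proof (dist2_ge0 x q). nra. }
     destruct (classic (x = p)) as [Exp|Exp].
     * exists y. split; auto. exists l. split. rewrite Exp; auto. lra.
     * destruct (arc_prepend A x p y l Hl Hs) as [l' [Hl' Hlen']].
       { intro E; subst; contradiction. }
       exists y. split; auto. exists l'. split; auto. lra. Qed.

Lemma Rabs_le_inv x y : Rabs x <= y -> -y <= x <= y.
Proof. intro H. unfold Rabs in H; destruct Rcase_abs; lra. Qed.

Lemma up_close a b : up a = up b -> Rabs (a - b) < 1.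
Proof. intro E. pose proof (archimed a); pose proof (archimed b). rewrite E in H.
 apply Rabs_def1; lra. Qed.

Lemma up_bound a M : 0 <= a <= M -> (0 <= up a)%Z /\ (up a <= up M)%Z.
Proof. intro H. pose proof (archimed a); pose proof (archimed M). split.
 - apply le_IZR. simpl. lra.
 - assert (up a < up M + 1)%Z. { apply lt_IZR. rewrite plus_IZR. simpl. lra. } lia. Qed.

Definition cellc (K c v : R) : nat := Z.to_nat (up ((v + K) / c)).

Lemma cellc_bound K c v : 0 < c -> Rabs v <= K -> (cellc K c v <= Z.to_nat (up (2 * K / c)))%nat.
Proof. intros Hc Hv. unfold cellc. apply Rabs_le_inv in Hv.
 assert (0 <= (v + K) / c <= 2 * K / c).
 { split. apply Rdiv_le_0_compat; lra. unfold Rdiv. apply Rmult_le_compat_r. left; apply Rinv_0_lt_compat; lra. lra. }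
 destruct (up_bound _ _ H). apply Z2Nat.inj_le; auto. lia. Qed.

Lemma cellc_close K c v w : 0 < c -> Rabs v <= K -> Rabs w <= K -> cellc K c v = cellc K c w -> Rabs (v - w) < c.
Proof. intros Hc Hv Hw E. unfold cellc in E. apply Rabs_le_inv in Hv. apply Rabs_le_inv in Hw.
 assert (0 <= (v + K) / c) by (apply Rdiv_le_0_compat; lra).
 assert (0 <= (w + K) / c) by (apply Rdiv_le_0_compat; lra).
 destruct (up_bound _ _ (conj H (Rle_refl _))). destruct (up_bound _ _ (conj H0 (Rle_refl _))).
 apply Z2Nat.inj in E; auto. apply up_close in E.
 replace ((v + K) / c - (w + K) / c) with ((v - w) / c) in E by (field; lra).
 unfold Rdiv in E. rewrite Rabs_mult, Rabs_inv, (Rabs_right c) in E by lra.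
 apply Rmult_lt_compat_r with (r := c) in E; auto. field_simplify in E; lra. Qed.

Lemma dist_small x y c : Rabs (fst x - fst y) < c -> Rabs (snd x - snd y) < c -> dist2 x y < 2 * c.
Proof. intros H1 H2. unfold dist2. assert (Hc : 0 < c) by (pose proof (Rabs_pos (fst x - fst y)); lra).
 rewrite <- (sqrt_pow2 (2*c)) by lra. apply sqrt_lt_1_alt. split.
 pose proof (pow2_ge_0 (fst x - fst y)); pose proof (pow2_ge_0 (snd x - snd y)); lra.
 rewrite <- (pow2_abs (fst x - fst y)), <- (pow2_abs (snd x - snd y)).
 pose proof (Rabs_pos (fst x - fst y)); pose proof (Rabs_pos (snd x - snd y)).
 assert (Rabs (fst x - fst y) ^ 2 < c^2) by (simpl; nra).
 assert (Rabs (snd x - snd y) ^ 2 < c^2) by (simpl; nra). simpl in *. nra. Qed.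

Lemma list_max_ge l : forall x, In x l -> (x <= fold_right Nat.max 0%nat l)%nat.
Proof. induction l; simpl; intros x H; [contradiction|]. destruct H as [->|H]. lia. specialize (IHl x H); lia. Qed.

Lemma nest_mono (Sq : nat -> pset) : (forall n x, Sq (S n) x -> int_pl (Sq n) x) ->
  forall n k x, Sq (n + k)%nat x -> Sq n x.
Proof. intros H n k. induction k; intros x Hx. rewrite Nat.add_0_r in Hx; auto.
 apply IHk. apply int_in, H. rewrite <- Nat.add_succ_r; auto. Qed.

Lemma packing (Sq : nat -> pset) r : 0 < r -> (forall n, disjoint_PL_disks (Sq n)) ->
  (forall n x, Sq (S n) x -> int_pl (Sq n) x) ->
  exists n2, forall n, (n2 <= n)%nat -> ~ (exists x, Sq n x /\ forall y, dist2 x y < r -> ~ Sq (S n) y).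
Proof. intros Hr HS Hnest. apply NNPP; intro Hinf.
 set (Bad := fun n => exists x, Sq n x /\ forall y, dist2 x y < r -> ~ Sq (S n) y).
 assert (HI : forall n2, exists n, (n2 <= n)%nat /\ Bad n).
 { intro n2. apply NNPP; intro Hn. apply Hinf. exists n2. intros n Hn2 Hb. apply Hn. exists n; auto. }
 assert (HX : forall n, exists x, Bad n -> Sq n x /\ forall y, dist2 x y < r -> ~ Sq (S n) y).
 { intro n. destruct (classic (Bad n)) as [[x Hx]|Hb]. exists x; auto. exists (0,0); intro; contradiction. }
 set (X := fun n => proj1_sig (constructive_indefinite_description _ (HX n))).
 assert (HXp : forall n, Bad n -> Sq n (X n) /\ forall y, dist2 (X n) y < r -> ~ Sq (S n) y).
 { intro n. unfold X. destruct (constructive_indefinite_description _ (HX n)); auto. }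
 destruct (S_bound (Sq 0%nat) (HS 0%nat)) as [K HK].
 assert (HK0 : forall n, Bad n -> Rabs (fst (X n)) <= K /\ Rabs (snd (X n)) <= K).
 { intros n Hb. apply HK. apply (nest_mono Sq Hnest 0 n). apply HXp; auto. }
 set (c := r / 2).
 assert (Hc : 0 < c) by (unfold c; lra).
 set (L := S (Z.to_nat (up (2 * K / c)))).
 set (cell := fun n => (cellc K c (fst (X n)), cellc K c (snd (X n)))).
 assert (Hlists : forall K0, exists ns, length ns = K0 /\ NoDup ns /\ forall n, In n ns -> Bad n).
 { induction K0 as [|K0 [ns [Hl [Hnd Hb]]]].
   - exists []. split; auto. split. constructor. intros n [].
   - destruct (HI (S (fold_right Nat.max 0%nat ns))) as [n [Hn Hbn]].
     exists (n :: ns). split. simpl; lia. split.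
     + constructor; auto. intro Hin. apply list_max_ge in Hin. lia.
     + intros m [<-|Hm]; auto. }
 destruct (Hlists (S (L * L))) as [ns [Hl [Hnd Hb]]].
 assert (Hnd2 : NoDup (map cell ns)).
 { apply NoDup_map_NoDup_ForallPairs; auto. intros a b Ha Hb' E.
   destruct (Nat.eq_dec a b) as [|Hab]; auto. exfalso.
   assert (Hclose : forall u v, (u < v)%nat -> Bad u -> Bad v -> cell u = cell v -> False).
   { intros u v Huv Bu Bv Euv. unfold cell in Euv. inversion Euv as [[E1 E2]].
     destruct (HK0 u Bu) as [U1 U2], (HK0 v Bv) as [V1 V2].
     pose proof (cellc_close K c _ _ Hc U1 V1 E1) as C1.
     pose proof (cellc_close K c _ _ Hc U2 V2 E2) as C2.
     pose proof (dist_small (X u) (X v) c C1 C2) as D.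
     apply (proj2 (HXp u Bu) (X v)). unfold c in D; lra.
     apply (nest_mono Sq Hnest (S u) (v - S u)). replace (S u + (v - S u))%nat with v by lia.
     apply HXp; auto. }
   destruct (Nat.lt_total a b) as [Hlt|[Heq|Hlt]].
   - exact (Hclose a b Hlt (Hb a Ha) (Hb b Hb') E).
   - contradiction.
   - exact (Hclose b a Hlt (Hb b Hb') (Hb a Ha) (eq_sym E)). }
 assert (Hincl : incl (map cell ns) (list_prod (seq 0%nat L) (seq 0%nat L))).
 { intros [i j] Hin. apply in_map_iff in Hin as [n [En Hn]]. unfold cell in En. inversion En as [[Ei Ej]].
   destruct (HK0 n (Hb n Hn)) as [G1 G2].
   apply in_prod; apply in_seq; split; try lia; unfold L.
   pose proof (cellc_bound K c _ Hc G1). lia.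
   pose proof (cellc_bound K c _ Hc G2). lia. }
 pose proof (NoDup_incl_length Hnd2 Hincl). rewrite length_map, length_prod, !length_seq in H. lia. Qed.

(* Sq n corresponds to S_{n+1} of the paper (indexing from 0). *)
Theorem mainTheorem6 (Sq : nat -> pset) :
  (forall n, disjoint_PL_disks (Sq n)) ->
  (forall n x, Sq (S n) x -> int_pl (Sq n) x) ->
  (Rbar_seq_to_0 (fun n => M_AB (Sq n) (Sq (S n))) <->
   Rbar_seq_to_0 (fun n => N_AB (Sq n) (Sq (S n)))).
Proof.
 intros HS Hnest. split; intros H eps Heps.
 - destruct (H eps Heps) as [n0 Hn0]. exists n0. intros n Hn. destruct (Hn0 n Hn) as [_ HM].
   split.
   + apply Rbar_lt_le_trans with 0. simpl; lra. apply glb_ge0. intros d [Hd _]; auto.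
   + eapply Rbar_le_lt_trans; [|exact HM]. unfold N_AB, M_AB. apply glb_mono.
     intros d [Hd Hall]. split; auto. intros x [Hcl Hni]. apply Hall. apply S_cl_in; auto.
 - set (r := eps/4). destruct (H r) as [n1 Hn1]. unfold r; lra.
   destruct (packing Sq r) as [n2 Hn2]; auto. unfold r; lra.
   exists (Nat.max n1 n2). intros n Hn. split.
   + apply Rbar_lt_le_trans with 0. simpl; lra. apply glb_ge0. intros d [Hd _]; auto.
   + apply Rbar_le_lt_trans with (3*r). apply glb_le_elem. split. unfold r; lra.
     intros x Ax. destruct (Hn1 n ltac:(lia)) as [_ HN].
     destruct (glb_lt_exists _ _ HN) as [d [[Hd Hbd] Hdr]].
     assert (Hbd' : forall p, bdry (Sq n) p -> reach_within (Sq n) (Sq (S n)) p r).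
     { intros p Hp. apply (reach_mono _ _ _ d); auto. lra. }
     assert (Hr : 0 < r) by (unfold r; lra).
     destruct (step (Sq n) (Sq (S n)) r (HS n) (HS (S n)) (Hnest n) Hr Hbd' x Ax) as [Hre|Hbad]; auto.
     exfalso. apply (Hn2 n ltac:(lia)). exists x; auto.
     simpl; unfold r; lra.
Qed.
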